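(* Let $k\ge 2$ be an integer and let $F$ be a $(k,2,k)$-pattern with $W^k(F)=W^{k-1}(F)=\cdots=W^{k-g(k)}(F)=0$. Then $F$ is homogeneous.
   Context: A $(k,2,k)$-pattern is a $k$-uniform hypergraph $F$ with a partition $V(F)=V_1\cup V_2$, $|V_1|=|V_2|=k$, such that whether $S\in\binom{V(F)}{k}$ is an edge depends only on $(|S\cap V_1|,|S\cap V_2|)$; $F$ is homogeneous if it is empty or complete. For a finite set $V$ with $|V|\ge 2k\ge 2r$ and $f\colon\binom{V}{k}\to\mathbb{R}$, \[ W^r(f)=\left(\mathbb{E}_{(a_1,b_1,\ldots,a_r,b_r)}\Big(\mathbb{E}_{R}\,(-1)^{|R\cap\{b_1,\ldots,b_r\}|}f(R)\Big)^2\right)^{1/2}, \] where $(a_1,b_1,\ldots,a_r,b_r)$ is a uniformly random sequence of $2r$ distinct elements of $V$, and $R$ is a uniformly random $k$-subset of $V$ with $|R\cap\{a_i,b_i\}|=1$ for each $i\in[r]$; $W^r(F)=W^r(\mathbf{1}_F)$ with $\mathbf{1}_F$ the edge indicator. $g(k)$ is the smallest integer $g\ge 0$ such that for each integer $m\in[2,k]$, the system $\sum_{0\le i\le r}(-1)^i\binom{r}{i}\alpha_i=0$ for $r=m-g,\ldots,m$, with $\vec\alpha=(\alpha_0,\ldots,\alpha_m)\in\{0,1\}^{m+1}$, has only the solutions $(0,\ldots,0)$ and $(1,\ldots,1)$. *)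

(* Defs.v *)
From mathcomp Require Import all_boot all_order all_algebra.
Set Implicit Arguments. Unset Strict Implicit. Unset Printing Implicit Defensive.
Import Order.TTheory GRing.Theory Num.Theory.
Local Open Scope ring_scope.

Definition eq_r (m r : nat) (alpha : {ffun 'I_m.+1 -> bool}) : bool :=
  (\sum_(i < r.+1) ((-1) ^+ i * ('C(r, i))%:Z * (alpha (inord i) : nat)%:Z) == 0 :> int).

Definition const_vec (m : nat) (alpha : {ffun 'I_m.+1 -> bool}) : bool :=
  [forall i, alpha i == false] || [forall i, alpha i == true].

(* Property defining g(k): for each m in [2,k], the system for r = m-g,...,m
   has only the constant solutions.  (For r < 0 the equation is an empty sum,
   hence trivial, so ranging over natural r with m - g <= r <= m, truncated
   subtraction, is the same system.) *)
Definition gprop (k g : nat) : bool :=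
  [forall m : 'I_k.+1, (2 <= m)%N ==>
     [forall alpha : {ffun 'I_m.+1 -> bool},
        [forall r : 'I_m.+1, ((m - g)%N <= r)%N ==> eq_r r alpha] ==> const_vec alpha]].

(* g(k) = the smallest g >= 0 with gprop k g.  gprop k k holds (the system then
   contains r = 0,...,m, which forces alpha = 0), so the least such g lies in
   [0, k] and is found by a search over 0..k. *)
Definition gk (k : nat) : nat := find (gprop k) (iota 0 k.+1).

Section W.
Variables (R : rcfType) (V : finType).

(* a sequence (a_1,b_1,...,a_r,b_r) is encoded as t : 'I_r -> V * V,
   t i = (a_{i+1}, b_{i+1}); it must consist of 2r distinct elements *)
Definition seq_of (r : nat) (t : {ffun 'I_r -> V * V}) : seq V :=
  flatten [seq [:: (t i).1; (t i).2] | i <- enum 'I_r].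

Definition distinct_seq (r : nat) (t : {ffun 'I_r -> V * V}) : bool :=
  uniq (seq_of t).

Definition goodR (k r : nat) (t : {ffun 'I_r -> V * V}) (S : {set V}) : bool :=
  (#|S| == k) && [forall i, #|S :&: [set (t i).1; (t i).2]| == 1%N].

Definition Bset (r : nat) (t : {ffun 'I_r -> V * V}) : {set V} :=
  [set (t i).2 | i : 'I_r].

Definition innerE (k r : nat) (f : {set V} -> R) (t : {ffun 'I_r -> V * V}) : R :=
  (\sum_(S : {set V} | goodR k t S) (-1) ^+ #|S :&: Bset t| * f S)
    / (#|[set S : {set V} | goodR k t S]|)%:R.

Definition W (k r : nat) (f : {set V} -> R) : R :=
  Num.sqrt ((\sum_(t : {ffun 'I_r -> V * V} | distinct_seq t) (innerE k f t) ^+ 2)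
              / (#|[set t : {ffun 'I_r -> V * V} | distinct_seq t]|)%:R).

Definition indicator (F : {set {set V}}) : {set V} -> R :=
  fun S => (S \in F)%:R.
End W.

Definition is_pattern (V : finType) (k : nat) (V1 V2 : {set V}) (F : {set {set V}}) : Prop :=
  [/\ V1 :|: V2 = [set: V] /\ [disjoint V1 & V2], #|V1| = k, #|V2| = k,
      (forall S, S \in F -> #|S| = k) &
      (forall S T : {set V}, #|S| = k -> #|T| = k ->
         #|S :&: V1| = #|T :&: V1| -> #|S :&: V2| = #|T :&: V2| ->
         (S \in F) = (T \in F))].

Definition homogeneous (V : finType) (k : nat) (F : {set {set V}}) : Prop :=
  F = set0 \/ F = [set S : {set V} | #|S| == k].

(* Main.v *)
Require Import Defs.
From mathcomp Require Import all_boot all_order all_algebra.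
From mathcomp Require Import ring lra zify.
Set Implicit Arguments. Unset Strict Implicit. Unset Printing Implicit Defensive.
Import Order.TTheory GRing.Theory Num.Theory.
Local Open Scope ring_scope.

Section Diff.
Variable R : rcfType.
Definition Dif (h : nat -> R) : nat -> R := fun j => h j.+1 - h j.
Definition DD (r : nat) (h : nat -> R) := iter r Dif h.

Lemma DDS r h j : DD r.+1 h j = DD r h j.+1 - DD r h j.
Proof. by rewrite /DD iterS. Qed.

Lemma DDSr r h : DD r.+1 h = DD r (Dif h).
Proof. by rewrite /DD iterSr. Qed.

Lemma DD_closed r (h : nat -> R) j :
  \sum_(i < r.+1) (-1) ^+ i * ('C(r, i))%:R * h (j + i)%N = (-1) ^+ r * DD r h j.
Proof.
elim: r j => [|r IH] j.
  by rewrite big_ord_recl big_ord0 /= addn0 addr0 !mul1r.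
rewrite big_ord_recl /= bin0 addn0 expr0 !mul1r.
under eq_bigr => i _ do rewrite /bump /= binS natrD mulrDr mulrDl add1n.
rewrite big_split /=. rewrite addrA.
have -> : \sum_(i < r.+1) (-1) ^+ i.+1 * ('C(r, i))%:R * h (j + i.+1)%N
   = - ((-1) ^+ r * DD r h j.+1).
  rewrite -IH -sumrN; apply: eq_bigr => i _.
  by rewrite exprS mulN1r !mulNr addSnnS.
have -> : h j + \sum_(i < r.+1) (-1) ^+ i.+1 * ('C(r, i.+1))%:R * h (j + i.+1)%N
   = \sum_(i < r.+2) (-1) ^+ i * ('C(r, i))%:R * h (j + i)%N.
  by rewrite [RHS]big_ord_recl /= bin0 expr0 !mul1r addn0.
rewrite big_ord_recr /= bin_small // mulr0n mulr0 mul0r addr0 IH /Dif -/(DD r h j.+1).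
by rewrite exprS; ring.
Qed.

Lemma step_lemma (h : nat -> R) (k r : nat) (V : finType) (Y : {set V}) (V1 : {set V}) :
  (r <= k)%N ->
  (exists S0 : {set V}, S0 \subset Y /\ #|S0| = (k - r)%N) ->
  \sum_(S : {set V} | (S \subset Y) && (#|S| == k - r)%N) DD r h #|S :&: V1| = 0 ->
  (forall j, (j + r.+1 <= k)%N -> DD r.+1 h j = 0) ->
  (forall j, (j + r <= k)%N -> DD r h j = 0).
Proof.
move=> rk [S0 [S0Y S0c]] Hsum Hnext.
have Hc : forall j, (j + r <= k)%N -> DD r h j = DD r h 0.
  elim=> // j IH Hj; rewrite -IH; last by lia.
  by apply/eqP; rewrite -subr_eq0 -DDS Hnext //; lia.
have : \sum_(S : {set V} | (S \subset Y) && (#|S| == k - r)%N) DD r h 0 = 0.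
  rewrite -[RHS]Hsum; apply: eq_bigr => S /andP [_ /eqP HS].
  rewrite [RHS]Hc //; have := subsetIl S V1; move/subset_leq_card; lia.
rewrite (eq_bigl (fun S => S \in [set S : {set V} | (S \subset Y) && (#|S| == k - r)%N])); last by move=> S; rewrite inE.
rewrite sumr_const => /eqP; rewrite mulrn_eq0 => /orP [/eqP H0|/eqP H0].
  exfalso; move/eqP: H0; rewrite eqn0Ngt => /negP []; apply/card_gt0P; exists S0.
  by rewrite !inE S0Y S0c eqxx.
by move=> j Hj; rewrite Hc.
Qed.
End Diff.

Section Key.
Variables (R : rcfType) (V : finType) (V1 : {set V}).
Definition pflat (ps : seq (V*V)) : seq V := flatten [seq [:: p.1; p.2] | p <- ps].
Definition pts ps : {set V} := [set x in pflat ps].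
Definition Bp (ps : seq (V*V)) : {set V} := [set x in [seq p.2 | p <- ps]].
Definition goodp (ps : seq (V*V)) (S : {set V}) :=
  all (fun p => #|S :&: [set p.1; p.2]| == 1%N) ps.

Lemma cardI2 (S : {set V}) a b : a != b -> #|S :&: [set a; b]| = ((a \in S) + (b \in S))%N.
Proof.
move=> nab.
case Ha: (a \in S); case Hb: (b \in S).
- have -> : S :&: [set a; b] = [set a; b].
    by apply/setP=> x; rewrite !inE; case: (x =P a) => [->|_]; last case: (x =P b) => [->|_]; rewrite ?eqxx ?Ha ?Hb ?(eq_sym b a) ?(negbTE nab) ?andbF ?andbT ?orbT ?orbF.
  by rewrite cards2 nab.
- have -> : S :&: [set a; b] = [set a].
    by apply/setP=> x; rewrite !inE; case: (x =P a) => [->|_]; last case: (x =P b) => [->|_]; rewrite ?eqxx ?Ha ?Hb ?(eq_sym b a) ?(negbTE nab) ?andbF ?andbT ?orbT ?orbF.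
  by rewrite cards1.
- have -> : S :&: [set a; b] = [set b].
    by apply/setP=> x; rewrite !inE; case: (x =P a) => [->|_]; last case: (x =P b) => [->|_]; rewrite ?eqxx ?Ha ?Hb ?(eq_sym b a) ?(negbTE nab) ?andbF ?andbT ?orbT ?orbF.
  by rewrite cards1.
- have -> : S :&: [set a; b] = set0.
    by apply/setP=> x; rewrite !inE; case: (x =P a) => [->|_]; last case: (x =P b) => [->|_]; rewrite ?eqxx ?Ha ?Hb ?(eq_sym b a) ?(negbTE nab) ?andbF ?andbT ?orbT ?orbF.
  by rewrite cards0.
Qed.

Lemma pflat_cons a b ps : pflat ((a, b) :: ps) = a :: b :: pflat ps.
Proof. by []. Qed.

Lemma goodp_cons p ps S : goodp (p :: ps) S = (#|S :&: [set p.1; p.2]| == 1%N) && goodp ps S.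
Proof. by []. Qed.

Lemma goodpU1 ps S x : x \notin pflat ps -> goodp ps (x |: S) = goodp ps S.
Proof.
elim: ps => [|[p1 p2] ps IH] // Hx.
move: Hx; rewrite pflat_cons !in_cons !negb_or => /andP [n1 /andP [n2 Hx]].
rewrite !goodp_cons IH //.
have -> : (x |: S) :&: [set (p1, p2).1; (p1, p2).2] = S :&: [set (p1, p2).1; (p1, p2).2] => //.
apply/setP=> y; rewrite !inE /=; case: (y =P x) => [->|_] //=.
by rewrite (negbTE n1) (negbTE n2) andbF.
Qed.

Lemma snd_in_pflat ps x : x \in [seq p.2 | p <- ps] -> x \in pflat ps.
Proof.
elim: ps => [|[p1 p2] ps IH] //=; rewrite pflat_cons !in_cons /=.
by case/orP => [->|/IH ->]; rewrite ?orbT.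
Qed.

Lemma Bp_cons a b ps x : (x \in Bp ((a, b) :: ps)) = (x == b) || (x \in Bp ps).
Proof. by rewrite /Bp !in_set /= in_cons. Qed.

Lemma key ps : forall (Y : {set V}) (s : nat) (h : nat -> R),
  uniq (pflat ps) -> all (fun p => (p.1 \in V1) && (p.2 \notin V1)) ps ->
  pts ps \subset Y -> (size ps <= s)%N ->
  \sum_(S : {set V} | (S \subset Y) && (#|S| == s) && goodp ps S)
      (-1) ^+ #|S :&: Bp ps| * h #|S :&: V1|
  = \sum_(S : {set V} | (S \subset Y :\: pts ps) && (#|S| == s - size ps)%N)
      DD (size ps) h #|S :&: V1|.
Proof.
elim: ps => [|[a b] ps IH] Y s h.
  move=> _ _ _ _; have E0 : pts [::] = set0 by apply/setP=> x; rewrite !inE.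
  have E1 : Bp [::] = set0 by apply/setP=> x; rewrite !inE.
  apply: eq_big => [S|S _]; first by rewrite andbT subn0 E0 setD0.
  by rewrite E1 setI0 cards0 expr0 mul1r.
move=> Hu; move: Hu; rewrite pflat_cons; move=> Hu /andP [/andP [aV1 bV1] Hall] HY Hs.
move: Hu; rewrite /= in_cons negb_or => /andP [/andP [nab naP] /andP [nbP Hu]].
have aY : a \in Y by apply: (subsetP HY); rewrite inE pflat_cons mem_head.
have bY : b \in Y by apply: (subsetP HY); rewrite inE pflat_cons !in_cons eqxx orbT.
have HY' : pts ps \subset Y.
  apply/subsetP => x Hx; apply: (subsetP HY); rewrite inE pflat_cons !in_cons.
  by rewrite inE in Hx; rewrite Hx !orbT.
have HY'' : pts ps \subset Y :\ a :\ b by rewrite !subsetD1 HY' !inE naP nbP.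
have Hs1 : (size ps < s)%N by exact: Hs.
have Hs' : (size ps <= s.-1)%N by clear -Hs1; lia.
have IH' := IH (Y :\ a :\ b) s.-1 (Dif h) Hu Hall HY'' Hs'.
transitivity (\sum_(S : {set V} | (S \subset Y :\ a :\ b) && (#|S| == s.-1) && goodp ps S)
   (-1) ^+ #|S :&: Bp ps| * Dif h #|S :&: V1|); last first.
  rewrite IH' -DDSr; apply: eq_bigl => S.
  have -> : (s.-1 - size ps = s - (size ps).+1)%N by clear -Hs1; lia.
  have -> : Y :\ a :\ b :\: pts ps = Y :\: pts ((a, b) :: ps) => //.
  apply/setP => x; rewrite /pts pflat_cons !inE !negb_or /=.
  by case: (x == a); case: (x == b); case: (x \in Y); case: (x \in pflat ps).

have Bcons := Bp_cons a b ps.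
have naB : a \notin Bp ps by rewrite /Bp inE; apply: contra naP; apply: snd_in_pflat.
have nbB : b \notin Bp ps by rewrite /Bp inE; apply: contra nbP; apply: snd_in_pflat.
have Es : forall n, (n.+1 == s) = (n == s.-1).
  by move=> n; apply/eqP/eqP; clear -Hs1; lia.
rewrite [LHS](bigID (fun S : {set V} => a \in S)) /=.
under [in RHS]eq_bigr => S _ do rewrite /Dif mulrBr.
rewrite sumrB; congr (_ + _).
- rewrite (reindex_onto (fun S' => a |: S') (fun S => S :\ a)) /=; last first.
    by move=> S /andP [_ aS]; rewrite setD1K.
  have Hcond : forall S' : {set V},
     (a |: S' \subset Y) && (#|a |: S'| == s) && goodp ((a, b) :: ps) (a |: S') &&
     (a \in a |: S') && ((a |: S') :\ a == S')
     = (S' \subset Y :\ a :\ b) && (#|S'| == s.-1) && goodp ps S'.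
    move=> S'; case: (boolP (a \in S')) => aS'.
      rewrite !subsetD1 aS' andbF /=.
      apply/negbTE; apply/negP => /andP [_ /eqP E].
      by have := aS'; rewrite -E !inE eqxx.
    rewrite goodp_cons setU1K // eqxx andbT setU11 andbT subUset sub1set aY /= cardsU1 aS' add1n Es.
    rewrite goodpU1 // cardI2 //= setU11 !inE (eq_sym b a) (negbTE nab) /=.
    rewrite !subsetD1 aS' /=.
    by case: (b \in S'); case: (S' \subset Y); case: (#|S'| == s.-1); case: (goodp ps S').
  apply: eq_big => [S'|S']; first exact: Hcond.
  rewrite Hcond => /andP [/andP [HS' _] _].
  move: HS'; rewrite !subsetD1 => /andP [/andP [_ aS'] bS'].
  have -> : (a |: S') :&: Bp ((a, b) :: ps) = S' :&: Bp ps.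
    apply/setP => x; rewrite !in_setI Bcons in_setU1.
    case: (x =P a) => [->|_] /=; first by rewrite (negbTE nab) (negbTE naB) (negbTE aS').
    case: (x =P b) => [->|_] //=; by rewrite (negbTE bS').
  have -> : (a |: S') :&: V1 = a |: (S' :&: V1).
    by apply/setP => x; rewrite !inE; case: (x =P a) => [->|_] //=; rewrite aV1.
  by rewrite cardsU1 inE (negbTE aS') /= add1n.
- rewrite -sumrN (reindex_onto (fun S' => b |: S') (fun S => S :\ b)) /=; last first.
    move=> S /andP [/andP [_ /andP [HS _]] aS]; rewrite setD1K //.
    move: HS; rewrite cardI2 //= (negbTE aS) add0n.
    by case: (b \in S).
  have Hcond : forall S' : {set V},
     (b |: S' \subset Y) && (#|b |: S'| == s) && goodp ((a, b) :: ps) (b |: S') &&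
     (a \notin b |: S') && ((b |: S') :\ b == S')
     = (S' \subset Y :\ a :\ b) && (#|S'| == s.-1) && goodp ps S'.
    move=> S'; case: (boolP (b \in S')) => bS'.
      rewrite !subsetD1 bS' andbF /=.
      apply/negbTE; apply/negP => /andP [_ /eqP E].
      by have := bS'; rewrite -E !inE eqxx.
    rewrite goodp_cons setU1K // eqxx andbT subUset sub1set bY /= cardsU1 bS' add1n Es.
    rewrite goodpU1 // cardI2 //= setU11 !inE (negbTE nab) /=.
    rewrite !subsetD1 bS' /=.
    by case: (a \in S'); case: (S' \subset Y); case: (#|S'| == s.-1); case: (goodp ps S').
  apply: eq_big => [S'|S']; first exact: Hcond.
  rewrite Hcond => /andP [/andP [HS' _] _].
  move: HS'; rewrite !subsetD1 => /andP [/andP [_ aS'] bS'].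
  have -> : (b |: S') :&: Bp ((a, b) :: ps) = b |: (S' :&: Bp ps).
    apply/setP => x; rewrite !in_setI Bcons !in_setU1 in_setI.
    by case: (x =P b) => [->|_] /=.
  have -> : (b |: S') :&: V1 = S' :&: V1.
    by apply/setP => x; rewrite !inE; case: (x =P b) => [->|_] //=; rewrite (negbTE bV1) (negbTE bS').
  by rewrite cardsU1 inE (negbTE bS') /= add1n exprS mulN1r mulNr.
Qed.
End Key.

Section Main.
Variables (R : rcfType) (V : finType).

Lemma W0_inner k r (f : {set V} -> R) (t : {ffun 'I_r -> V * V}) :
  distinct_seq t -> W k r f = 0 ->
  \sum_(S : {set V} | goodR k t S) (-1) ^+ #|S :&: Bset t| * f S = 0.
Proof.
move=> dt /eqP; rewrite /W sqrtr_eq0.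
set X := \sum_(t0 | _) _. set N := #|_|.
have X0 : 0 <= X by apply: sumr_ge0 => t' _; apply: sqr_ge0.
have N0 : (0 < N)%N by apply/card_gt0P; exists t; rewrite inE.
move=> HXN.
have XN0 : X / N%:R = 0 by apply/eqP; rewrite eq_le HXN divr_ge0.
have X00 : X = 0.
  by move/eqP: XN0; rewrite mulf_eq0 invr_eq0 pnatr_eq0 eqn0Ngt N0 orbF => /eqP.
have Ht := psumr_eq0P (fun t' _ => sqr_ge0 (innerE k f t')) X00 dt.
move/eqP: Ht; rewrite expf_eq0 /= /innerE mulf_eq0 invr_eq0 pnatr_eq0.
case/orP => [/eqP //|/eqP /cards0_eq E].
by rewrite big_pred0 // => S; move/setP: E => /(_ S); rewrite !inE.
Qed.

Lemma pflat_mem (ps : seq (V * V)) x :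
  (x \in pflat ps) = (x \in map fst ps) || (x \in map snd ps).
Proof.
elim: ps => [|[a b] ps IH] //; rewrite pflat_cons /= !in_cons IH.
by case: (x == a); case: (x == b); case: (x \in map fst ps); case: (x \in map snd ps).
Qed.

Lemma uniq_pflat (V1 : {set V}) (ps : seq (V * V)) :
  uniq (map fst ps) -> uniq (map snd ps) ->
  all (fun p => (p.1 \in V1) && (p.2 \notin V1)) ps -> uniq (pflat ps).
Proof.
elim: ps => [|[a b] ps IH] //; rewrite pflat_cons /= => /andP [na u1] /andP [nb u2] /andP [/andP [aV bV] Hall].
move: aV bV => /= aV bV.
have nab : a != b by apply/eqP => ab; rewrite -ab aV in bV.
have naS : a \notin map snd ps.
  apply/negP => /mapP [p pin ap]; move/allP: Hall => /(_ p pin) /andP [_].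
  by rewrite -ap aV.
have nbF : b \notin map fst ps.
  apply/negP => /mapP [p pin bp]; move/allP: Hall => /(_ p pin) /andP [].
  by rewrite -bp (negbTE bV).
rewrite IH // andbT !in_cons !pflat_mem !negb_or.
by rewrite nab na naS nb nbF.
Qed.

Lemma goodR_goodp k r (t : {ffun 'I_r -> V * V}) (S : {set V}) :
  goodR k t S = (S \subset setT) && (#|S| == k) && goodp [seq t i | i <- enum 'I_r] S.
Proof.
rewrite subsetT /goodR /goodp all_map; congr (_ && _).
apply/forallP/allP => [H i _|H i]; first exact: H.
by apply: H; rewrite mem_enum.
Qed.

Lemma Bset_Bp r (t : {ffun 'I_r -> V * V}) : Bset t = Bp [seq t i | i <- enum 'I_r].
Proof.
apply/setP => x; rewrite /Bset /Bp [RHS]in_set -map_comp.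
apply/imsetP/mapP => [[i _ ->]|[i _ ->]]; by exists i; rewrite ?mem_enum.
Qed.

Lemma seq_of_pflat r (t : {ffun 'I_r -> V * V}) : seq_of t = pflat [seq t i | i <- enum 'I_r].
Proof. by rewrite /seq_of /pflat -map_comp. Qed.

End Main.

Unset Implicit Arguments.
Set Strict Implicit.
Theorem lemma4p4 (R : rcfType) (k : nat) (V : finType) (V1 V2 : {set V})
    (F : {set {set V}}) :
  (2 <= k)%N ->
  is_pattern k V1 V2 F ->
  (forall r : nat, (k - gk k <= r <= k)%N -> W k r (indicator R F) = 0) ->
  homogeneous k F.
Proof.
move=> k2 [[UV dV] c1 c2 Fk Fpat] HW.
have V2E : V2 = ~: V1.
  apply/setP => x; rewrite inE; move/setP: UV => /(_ x); rewrite !inE.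
  case xV1: (x \in V1) => /=; last by move=> ->.
  by rewrite (disjointFr dV xV1).
pose hb := fun l : nat => [exists S : {set V}, (#|S| == k) && (#|S :&: V1| == l) && (S \in F)].
pose h : nat -> R := fun l => (hb l)%:R.
have cardV2 : forall S : {set V}, #|S :&: V2| = (#|S| - #|S :&: V1|)%N.
  by move=> S; rewrite V2E -setDE -(cardsID V1 S) addKn.
have inF : forall S : {set V}, #|S| = k -> (S \in F) = hb #|S :&: V1|.
  move=> S Sk; apply/idP/existsP => [SF|[T /andP [/andP [/eqP Tk /eqP TV1] TF]]].
    by exists S; rewrite Sk SF !eqxx.
  by rewrite (Fpat S T) // !cardV2 Sk Tk TV1.
have SV1k : forall S : {set V}, #|S| = k -> (#|S :&: V1| <= k)%N.
  by move=> S <-; apply: subset_leq_card; apply: subsetIl.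
have Fempty : (forall j, (j <= k)%N -> hb j = false) -> homogeneous k F.
  move=> H; left; apply/setP => S; rewrite inE; apply/negbTE/negP => SF.
  have Sk := Fk S SF; move: SF; rewrite inF // H //; exact: SV1k.
have Ffull : (forall j, (j <= k)%N -> hb j) -> homogeneous k F.
  move=> H; right; apply/setP => S; rewrite inE; apply/idP/idP => [SF|/eqP Sk].
    by rewrite Fk.
  by rewrite inF // H // SV1k.
have [x0 _] : exists x0, x0 \in V1.
  by apply/card_gt0P; rewrite c1; apply: leq_trans k2.
pose e1 n := nth x0 (enum V1) n.
pose e2 n := nth x0 (enum V2) n.
have s1 : size (enum V1) = k by rewrite -cardE.
have s2 : size (enum V2) = k by rewrite -cardE.
have e1V : forall n, (n < k)%N -> e1 n \in V1.
  by move=> n nk; rewrite -mem_enum mem_nth // s1.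
have e2V : forall n, (n < k)%N -> e2 n \notin V1.
  move=> n nk; have : e2 n \in V2 by rewrite -mem_enum mem_nth // s2.
  by rewrite V2E inE.
have Er : forall r, (r <= k)%N -> W k r (indicator R F) = 0 ->
   exists Y : {set V}, (exists S0 : {set V}, S0 \subset Y /\ #|S0| = (k - r)%N) /\
     \sum_(S : {set V} | (S \subset Y) && (#|S| == k - r)%N) DD r h #|S :&: V1| = 0.
  move=> r rk HWr.
  pose t : {ffun 'I_r -> V * V} := [ffun i : 'I_r => (e1 i, e2 i)].
  pose ps := [seq t i | i <- enum 'I_r].
  have psE : ps = [seq (e1 n, e2 n) | n <- iota 0 r].
    by rewrite /ps -val_enum_ord -map_comp; apply: eq_map => i; rewrite /= ffunE.
  have fstE : map fst ps = take r (enum V1).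
    by rewrite psE -map_comp -(map_nth_iota0 x0) ?s1 //; apply: eq_map.
  have sndE : map snd ps = take r (enum V2).
    by rewrite psE -map_comp -(map_nth_iota0 x0) ?s2 //; apply: eq_map.
  have mixed : all (fun p => (p.1 \in V1) && (p.2 \notin V1)) ps.
    rewrite psE all_map; apply/allP => n; rewrite mem_iota add0n => /andP [_ nr] /=.
    by rewrite e1V ?e2V //; apply: leq_trans rk.
  have up : uniq (pflat ps).
    by apply: (uniq_pflat (V1:=V1)); rewrite ?fstE ?sndE ?take_uniq ?enum_uniq.
  have dt : distinct_seq t by rewrite /distinct_seq seq_of_pflat.
  have sz : size ps = r by rewrite size_map size_enum_ord.
  have H0 := W0_inner dt HWr.
  exists (setT :\: pts ps); split.
    exists [set x in drop r (enum V1)]; split.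
      apply/subsetP => x; rewrite inE => xd; rewrite !inE andbT /pts ?inE pflat_mem fstE sndE negb_or.
      apply/andP; split.
        have := enum_uniq V1; rewrite -[X in uniq X](cat_take_drop r (enum V1)) cat_uniq.
        by case/and3P => _ /hasPn H _; apply: H.
      apply/negP => /mem_take; rewrite mem_enum V2E inE.
      by move: (mem_drop xd); rewrite mem_enum => ->.
    rewrite cardsE; move/card_uniqP: (drop_uniq r (enum_uniq V1)) => ->.
    by rewrite size_drop s1.
  rewrite -sz -(key (V1:=V1) (R:=R) (Y:=setT) (s:=k)) ?subsetT ?sz //.
  rewrite -[RHS]H0; apply: eq_big => S; first by rewrite goodR_goodp.
  move=> /andP [/andP [_ /eqP Sk] _].
  by rewrite Bset_Bp /indicator inF.
have P : forall n r, (k - gk k <= r)%N -> (k - r <= n)%N ->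
    forall j, (j + r <= k)%N -> DD r h j = 0.
  elim=> [|n IH] r Hr Hn j Hj.
    have rk : (r <= k)%N by clear -Hj; lia.
    have [Y [HS0 Hsum]] := Er r rk (HW r ltac:(by rewrite Hr rk)).
    apply: (step_lemma rk HS0 Hsum) => // j' Hj'.
    exfalso; clear -Hj' Hn; lia.
  have rk : (r <= k)%N by clear -Hj; lia.
  have [Y [HS0 Hsum]] := Er r rk (HW r ltac:(by rewrite Hr rk)).
  apply: (step_lemma rk HS0 Hsum) => // j' Hj'.
  apply: (IH r.+1) => //; clear -Hr Hn; lia.
have hbh : forall j, hb j = (h j != 0).
  by move=> j; rewrite /h pnatr_eq0; case: (hb j).
case: (leqP (gk k) k) => Hgk; last first.
  apply: Fempty => j jk; rewrite hbh; apply/negbTE; rewrite negbK.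
  apply/eqP; apply: (P k 0); clear -Hgk jk; lia.
have Hg : gprop k (gk k).
  have hasg : has (gprop k) (iota 0 k.+1) by rewrite has_find size_iota ltnS.
  by have := nth_find 0 hasg; rewrite nth_iota ?add0n // size_iota ltnS.
pose alpha : {ffun 'I_k.+1 -> bool} := [ffun i : 'I_k.+1 => hb i].
have Halpha : forall j, (j <= k)%N -> alpha (inord j) = hb j.
  by move=> j jk; rewrite ffunE inordK.
move: Hg => /forallP /(_ ord_max) /implyP /(_ k2) /forallP /(_ alpha) /implyP H.
have Hc : const_vec alpha.
  apply: H; apply/forallP => r; apply/implyP => Hr.
  have rk : (r <= k)%N by rewrite -ltnS.
  rewrite /eq_r -(intr_eq0 R) rmorph_sum /=.
  have : (-1) ^+ r * DD r h 0 = 0 by rewrite (P k r) ?mulr0 //; clear -rk; lia.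
  rewrite -DD_closed => E; rewrite -[X in _ == X]E; apply/eqP; apply: eq_bigr => i _.
  rewrite !intrM rmorph_sign -!pmulrn add0n Halpha //.
  by apply: leq_trans rk; rewrite -ltnS.
case/orP: Hc => /forallP Hc.
  apply: Fempty => j jk; rewrite -Halpha //; exact/eqP/Hc.
apply: Ffull => j jk; rewrite -Halpha //; exact/eqP/Hc.
Qed.
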